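(* Let $d\ge 2$ and let $\rho_{DS}=\sum_{\mathbf{k}} p_{\mathbf{k}}\,|D_{\mathbf{k}}\rangle\langle D_{\mathbf{k}}|$ be a diagonal symmetric state on $(\mathbb{C}^d)^{\otimes 3}$. Let $M^{(3)}(\rho_{DS})=\bigoplus_{i=0}^{d-1}M^{(3)}_i(\rho_{DS})$, where $M^{(3)}_i(\rho_{DS})$ is the $d\times d$ matrix with entries $\big(M^{(3)}_i\big)_{ab}=\bar p_{iab}$, $a,b\in\{0,\dots,d-1\}$. Then $\rho_{DS}$ is PPT if and only if $M^{(3)}(\rho_{DS})\in\mathcal{DNN}_{d^2}$.
   Context: For $N$ parties and local dimension $d$, $\mathbf{k}=(k_0,\dots,k_{d-1})$, $k_i\ge0$, $\sum_ik_i=N$, and the Dicke state is $|D_{\mathbf k}\rangle=\binom{N}{\mathbf k}^{-1/2}\sum_{\pi}\pi\big(|0\rangle^{\otimes k_0}\otimes\cdots\otimes|d-1\rangle^{\otimes k_{d-1}}\big)$, summing over all distinct permutations of tensor factors, with $\binom{N}{\mathbf k}=\frac{N!}{k_0!\cdots k_{d-1}!}$. A diagonal symmetric state is $\sum_{\mathbf k}p_{\mathbf k}|D_{\mathbf k}\rangle\langle D_{\mathbf k}|$ with $p_{\mathbf k}\ge0$, $\sum p_{\mathbf k}=1$. Here $N=3$; $p_{ijk}$ denotes the coefficient of the Dicke state with index multiset $\{i,j,k\}$, and $\bar p_{ijk}=p_{ijk}/N_{ijk}$ with $N_{ijk}=1$ if $i=j=k$, $3$ if exactly two indices coincide, $6$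 if all are distinct. The state is PPT if its partial transpose with respect to a single party (by permutation symmetry, any party) is positive semidefinite. $\mathcal{DNN}_n$ is the cone of $n\times n$ doubly non-negative matrices: positive semidefinite with all entries non-negative. *)

(* Defs.v *)
From HB Require Import structures.
From mathcomp Require Import all_boot all_order all_algebra.
From mathcomp Require Import algC.
Set Implicit Arguments. Unset Strict Implicit. Unset Printing Implicit Defensive.
Import Order.TTheory GRing.Theory Num.Theory.
Local Open Scope ring_scope.

(* Computational basis of (C^d)^{ox 3}: triples of local indices. *)
Definition basis3 (d : nat) : finType := ('I_d * 'I_d * 'I_d)%type.

(* Dicke indices: occupation numbers k : 'I_d -> {0..3}; valid iff sum = 3. *)
Definition dicke_idx (d : nat) : finType := {ffun 'I_d -> 'I_4}.
Definition valid_idx d (k : dicke_idx d) : bool := (\sum_i (k i : nat) == 3)%N.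

Definition occ d (x : basis3 d) (i : 'I_d) : nat :=
  ((x.1.1 == i) + (x.1.2 == i) + (x.2 == i))%N.

Definition mset3 d (i a b : 'I_d) : dicke_idx d :=
  [ffun j => inord ((i == j) + (a == j) + (b == j))%N].

Definition multinom d (k : dicke_idx d) : algC :=
  (3`!)%:R / \prod_i ((k i : nat)`!)%:R.

(* Dicke vector |D_k>: normalized sum of all distinct permutations of
   |0>^{k_0} ... |d-1>^{k_{d-1}}, i.e. of all basis strings with
   occupation numbers k, each appearing exactly once. *)
Definition dicke d (k : dicke_idx d) (x : basis3 d) : algC :=
  if [forall i, occ x i == (k i : nat)] then (sqrtC (multinom k))^-1 else 0.

Definition fmat (T : finType) := T -> T -> algC.

Definition rhoDS d (p : dicke_idx d -> algC) : fmat (basis3 d) :=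
  fun x y => \sum_(k | valid_idx k) p k * dicke k x * (dicke k y)^*.

Definition ptrans1 d (A : fmat (basis3 d)) : fmat (basis3 d) :=
  fun x y => A (y.1.1, x.1.2, x.2) (x.1.1, y.1.2, y.2).

Definition psd (T : finType) (A : fmat T) : Prop :=
  forall v : T -> algC, 0 <= \sum_i \sum_j (v i)^* * A i j * v j.

Definition PPT d (p : dicke_idx d -> algC) : Prop := psd (ptrans1 (rhoDS p)).

Definition DNN (T : finType) (A : fmat T) : Prop :=
  psd A /\ forall i j, 0 <= A i j.

Definition Ncount d (i j k : 'I_d) : algC :=
  if (i == j) && (j == k) then 1
  else if (i != j) && (j != k) && (i != k) then 6 else 3.

Definition pbar d (p : dicke_idx d -> algC) (i j k : 'I_d) : algC :=
  p (mset3 i j k) / Ncount i j k.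

(* M^(3) = (+)_i M_i, indexed by pairs (block i, row a), (M_i)_{ab} = pbar i a b *)
Definition M3 d (p : dicke_idx d -> algC) : fmat ('I_d * 'I_d)%type :=
  fun x y => if x.1 == y.1 then pbar p x.1 x.2 y.2 else 0.

(* Main.v *)
Require Import Defs.
From mathcomp Require Import all_boot all_order all_algebra.
From mathcomp Require Import algC.
From mathcomp Require Import zify ring.
Set Implicit Arguments. Unset Strict Implicit. Unset Printing Implicit Defensive.
Import Order.TTheory GRing.Theory Num.Theory.
Local Open Scope ring_scope.

Definition cnt d (a b c j : 'I_d) : nat := ((a == j) + (b == j) + (c == j))%N.

Lemma mset3E d (a b c j : 'I_d) : (mset3 a b c j : nat) = cnt a b c j.
Proof.
rewrite /mset3 ffunE inordK // /cnt.
by case: (a == j); case: (b == j); case: (c == j).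
Qed.

Lemma mset3_eqP d (a b c a' b' c' : 'I_d) :
  reflect (forall j, cnt a b c j = cnt a' b' c' j) (mset3 a b c == mset3 a' b' c').
Proof.
apply: (iffP eqP) => [H j | H]; first by rewrite -!mset3E H.
apply/ffunP => j; apply: val_inj; by rewrite /= !mset3E.
Qed.

Lemma forall_occ d (x : basis3 d) (k : dicke_idx d) :
  [forall i, occ x i == (k i : nat)] = (k == mset3 x.1.1 x.1.2 x.2).
Proof.
apply/forallP/eqP => [H|-> i]; last by rewrite mset3E.
apply/ffunP => j; apply: val_inj; rewrite /= mset3E -(eqP (H j)) //.
Qed.

Lemma sumb1 d (a : 'I_d) : (\sum_(i < d) (a == i) = 1)%N.
Proof.
rewrite (bigD1 a) //= eqxx big1 // => i ia; by rewrite eq_sym (negPf ia).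
Qed.

Lemma valid_mset d (a b c : 'I_d) : valid_idx (mset3 a b c).
Proof.
rewrite /valid_idx (eq_bigr (cnt a b c)) => [|i _]; last by rewrite mset3E.
by rewrite /cnt !big_split /= !sumb1.
Qed.

Lemma cnt_bool d (a j : 'I_d) : ((a == j) <= 1)%N.
Proof. by case: (a == j). Qed.

Lemma test d (a b j : 'I_d) : ((a == j) + (b == j) = 3)%N -> False.
Proof. move=> H. lia. Qed.

Lemma prod_mset d (a b c : 'I_d) :
  (\prod_i ((mset3 a b c i : nat)`!) =
   if (a == b) && (b == c) then 6 else
   if (a != b) && (b != c) && (a != c) then 1 else 2)%N.
Proof.
under eq_bigr do rewrite mset3E.
rewrite /cnt.
case: (eqVneq a b) => [<-|ab]; case: (eqVneq a c) => [<-|ac] /=.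
- rewrite (bigD1 a) //= eqxx big1 // => i ia; by rewrite eq_sym (negPf ia).
- have ca : c != a by rewrite eq_sym.
  rewrite (bigD1 a) //= (bigD1 c) /=; last by rewrite ca.
  rewrite !eqxx (negPf ac) (negPf ca).
  rewrite big1 // => i /andP[ia ic]; by rewrite eq_sym (negPf ia) eq_sym (negPf ic).
- have ba : b != a by rewrite eq_sym.
  rewrite ba /=.
  rewrite (bigD1 a) //= (bigD1 b) /=; last by rewrite ba.
  rewrite !eqxx (negPf ab) (negPf ba).
  rewrite big1 // => i /andP[ia ib]; by rewrite eq_sym (negPf ia) eq_sym (negPf ib).
- have ba : b != a by rewrite eq_sym.
  case: (eqVneq b c) => [<-|bc] /=.
  + rewrite (bigD1 a) //= (bigD1 b) /=; last by rewrite ba.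
    rewrite !eqxx (negPf ab) (negPf ba).
    rewrite big1 // => i /andP[ia ib]; by rewrite eq_sym (negPf ia) eq_sym (negPf ib).
  + rewrite big1 // => i _.
    have cb : c != b by rewrite eq_sym.
    have ca : c != a by rewrite eq_sym.
    case: (eqVneq a i) => [<-|ai]; first by rewrite (negPf ba) (negPf ca).
    case: (eqVneq b i) => [<-|bi]; first by rewrite (negPf cb).
    by case: (c == i).
Qed.

Lemma multinom_mset d (a b c : 'I_d) : multinom (mset3 a b c) = Ncount a b c.
Proof.
rewrite /multinom -natr_prod prod_mset /Ncount.
case: ifP => _; first by rewrite divff // pnatr_eq0.
case: ifP => _; first by rewrite divr1.
by rewrite (_ : 3`! = 3 * 2)%N // natrM mulfK // pnatr_eq0.
Qed.

Lemma Ncount_gt0 d (a b c : 'I_d) : 0 < Ncount a b c.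
Proof. rewrite /Ncount; case: ifP => _; [exact: ltr01|case: ifP => _; exact: ltr0Sn]. Qed.

Definition ms d (x : basis3 d) := mset3 x.1.1 x.1.2 x.2.
Definition q d (p : dicke_idx d -> algC) k := p k / multinom k.

Lemma multinom_gt0 d (a b c : 'I_d) : 0 < multinom (mset3 a b c).
Proof. by rewrite multinom_mset Ncount_gt0. Qed.

Lemma q_ge0 d (p : dicke_idx d -> algC) (a b c : 'I_d) :
  (forall k, 0 <= p k) -> 0 <= q p (mset3 a b c).
Proof. move=> hp; by rewrite divr_ge0 // ltW // multinom_gt0. Qed.

Lemma pbarE d (p : dicke_idx d -> algC) (a b c : 'I_d) : pbar p a b c = q p (mset3 a b c).
Proof. by rewrite /pbar /q multinom_mset. Qed.

Lemma rhoE d (p : dicke_idx d -> algC) x y :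
  rhoDS p x y = if ms x == ms y then q p (ms x) else 0.
Proof.
rewrite /rhoDS (bigD1 (ms x)) ?valid_mset //= big1 ?addr0; last first.
  by move=> k /andP[_ hk]; rewrite /dicke forall_occ (negPf hk) mulr0 mul0r.
rewrite /dicke !forall_occ eqxx -/(ms y).
case: ifP => _; last by rewrite conjC0 mulr0.
have m0 := multinom_gt0 x.1.1 x.1.2 x.2.
set m := multinom _ in m0 *.
rewrite geC0_conj ?invr_ge0 ?sqrtC_ge0 ?ltW // -mulrA -invrM ?unitfE ?sqrtC_eq0 ?gt_eqF //.
by rewrite -expr2 sqrtCK.
Qed.

Definition Ix d (a b c : 'I_d) := (a == b) || (a == c).
Definition ox d (a b c : 'I_d) := if a == b then c else b.
Definition sw d (b c b' c' : 'I_d) := ((b == b') && (c == c')) || ((b == c') && (c == b')).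

Lemma F1 d (a b c : 'I_d) : Ix a b c -> forall j, ((b==j) + (c==j) = (a==j) + (ox a b c == j))%N.
Proof.
rewrite /Ix /ox; case: (eqVneq a b) => [<-|_] //= /eqP <- j; lia.
Qed.

Lemma F2 d (a b c : 'I_d) : ~~ Ix a b c -> ((b==a) + (c==a) = 0)%N.
Proof. by rewrite /Ix negb_or => /andP[]; rewrite !(eq_sym a) => /negPf-> /negPf->. Qed.

Lemma sw_cnt d (b c b' c' : 'I_d) :
  (forall j, ((b==j)+(c==j) = (b'==j)+(c'==j))%N) <-> sw b c b' c'.
Proof.
split => [H|]; last first.
  by case/orP => /andP[/eqP-> /eqP->] j //; rewrite addnC.
rewrite /sw; case: (eqVneq b b') => [eb|nb] /=.
  subst b'; have Hc := H c; rewrite eqxx in Hc.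
  case: (eqVneq c c') Hc => // ncc Hc; lia.
have Hb := H b; rewrite eqxx (eq_sym b') (negPf nb) in Hb.
case: (eqVneq b c') Hb => [ebc|nbc]; last by lia.
subst c' => _ /=.
have Hc := H c; rewrite eqxx in Hc.
case: (eqVneq c b') Hc => // ncb' Hc; lia.
Qed.

Lemma split_pt d (p : dicke_idx d -> algC) (a b c a' b' c' : 'I_d) :
 (if mset3 a' b c == mset3 a b' c' then q p (mset3 a' b c) else 0) =
 (if [&& Ix a b c, Ix a' b' c' & ox a b c == ox a' b' c'] then q p (mset3 (ox a b c) a a') else 0) +
 (if (a == a') && sw b c b' c' then (if ~~ Ix a b c then q p (mset3 a b c) else 0) else 0).
Proof.
case: (eqVneq a a') => [ea|na].
- subst a' => /=.
  case I: (Ix a b c) => /=.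
  + rewrite if_same addr0.
    have F := F1 I.
    have E : mset3 (ox a b c) a a = mset3 a b c.
      by apply/eqP/mset3_eqP => j; rewrite /cnt; have:= F j; lia.
    rewrite E.
    have -> : (mset3 a b c == mset3 a b' c') = Ix a b' c' && (ox a b c == ox a b' c').
      apply/mset3_eqP/andP => [H|[I' /eqP eo] j]; last first.
        by rewrite /cnt; have:= F j; have := F1 I' j; rewrite eo; lia.
      have I' : Ix a b' c'.
        apply/negPn/negP => nI; have := F2 nI; have := H a; have := F a.
        rewrite /cnt eqxx; lia.
      split => //; have F' := F1 I'.
      move: (H (ox a b c)) (F (ox a b c)) (F' (ox a b c)); rewrite /cnt eqxx.
      case: (eqVneq (ox a b' c') (ox a b c)) => // _; lia.
    by [].
  + rewrite add0r.
    have -> : (mset3 a b c == mset3 a b' c') = sw b c b' c'.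
      apply/mset3_eqP/idP => [H|/sw_cnt H j]; [apply/sw_cnt => j; have := H j | have := H j]; rewrite /cnt; lia.
    by [].
- rewrite addr0.
  have na' : (a' == a) = false by rewrite eq_sym (negPf na).
  have -> : (mset3 a' b c == mset3 a b' c') = [&& Ix a b c, Ix a' b' c' & ox a b c == ox a' b' c'].
    apply/mset3_eqP/and3P => [H|[I I' /eqP eo] j]; last first.
      by rewrite /cnt; have:= F1 I j; have := F1 I' j; rewrite eo; lia.
    have I : Ix a b c.
      apply/negPn/negP => nI; have := F2 nI; have := H a.
      rewrite /cnt eqxx na'; lia.
    have I' : Ix a' b' c'.
      apply/negPn/negP => nI; have := F2 nI; have := H a'.
      rewrite /cnt eqxx (negPf na); lia.
    split => //; have F := F1 I; have F' := F1 I'.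
    move: (H (ox a b c)) (F (ox a b c)) (F' (ox a b c)); rewrite /cnt eqxx.
    case: (eqVneq (ox a' b' c') (ox a b c)) => // _; lia.
  case: ifP => // /and3P[I _ _]; congr q.
  by apply/eqP/mset3_eqP => j; rewrite /cnt; have:= F1 I j; lia.
Qed.

Lemma conj_sum (T : finType) (P : T -> bool) (f : T -> algC) :
  (\sum_x (if P x then f x else 0))^* = \sum_x (if P x then (f x)^* else 0).
Proof. rewrite rmorph_sum; apply: eq_bigr => x _; case: (P x) => //; exact: rmorph0. Qed.

Lemma equiv_psd (T : finType) (E : rel T) (g : T -> algC) (w : T -> algC) :
 (forall x, E x x) -> (forall x y, E x y -> E y x) ->
 (forall x y z, E x y -> E y z -> E x z) ->
 (forall x y, E x y -> g x = g y) -> (forall x, 0 <= g x) ->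
 0 <= \sum_x \sum_y (w x)^* * (if E x y then g x else 0) * w y.
Proof.
move=> Er Es Et Eg g0.
pose S x := \sum_y (if E x y then w y else 0).
pose n x := \sum_y (if E x y then 1 else 0) : algC.
have EE : forall x z y, E x z -> E z y = E x y.
  move=> x z y xz; apply/idP/idP => h; [exact: Et xz h | exact: Et (Es _ _ xz) h].
have Sx : forall x z, E x z -> S z = S x.
  by move=> x z xz; apply: eq_bigr => y _; rewrite (EE x z y xz).
have nx : forall x z, E x z -> n z = n x.
  by move=> x z xz; apply: eq_bigr => y _; rewrite (EE x z y xz).
have n_gt0 : forall x, 0 < n x.
  move=> x; rewrite /n (bigD1 x) //= Er.
  apply: (lt_le_trans ltr01); rewrite lerDl sumr_ge0 // => y _; by case: ifP.
pose h z := (w z)^* * g z * S z.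
have step1 : \sum_x \sum_y (w x)^* * (if E x y then g x else 0) * w y = \sum_x h x.
  apply: eq_bigr => x _; rewrite /h /S mulr_sumr; apply: eq_bigr => y _.
  by case: ifP; rewrite ?mulr0 ?mul0r.
have step2 : \sum_x h x = \sum_x \sum_z (if E x z then h z / n z else 0).
  rewrite exchange_big /=; apply: eq_bigr => z _.
  transitivity (h z / n z * n z); first by rewrite divfK // gt_eqF.
  rewrite /n mulr_sumr; apply: eq_bigr => x _.
  have -> : E z x = E x z by apply/idP/idP => /Es.
  by case: ifP => _; rewrite ?mulr1 ?mulr0.
have step3 : forall x, \sum_z (if E x z then h z / n z else 0)
                        = g x * (S x * (S x)^*) / n x.
  move=> x; rewrite /S conj_sum mulr_sumr mulr_sumr mulr_suml.
  apply: eq_bigr => z _; case: ifP => xz; last by rewrite !(mulr0, mul0r).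
  rewrite /h -(Eg _ _ xz) (Sx _ _ xz) (nx _ _ xz) /S; ring.
rewrite step1 step2; apply: sumr_ge0 => x _; rewrite step3.
apply: divr_ge0; [apply: mulr_ge0 => //; exact: mul_conjC_ge0 | exact: ltW].
Qed.

Definition Ib d (x : basis3 d) := Ix x.1.1 x.1.2 x.2.
Definition ob d (x : basis3 d) := ox x.1.1 x.1.2 x.2.
Definition Ax d (p : dicke_idx d -> algC) (x y : basis3 d) :=
  if [&& Ib x, Ib y & ob x == ob y] then q p (mset3 (ob x) x.1.1 y.1.1) else 0.
Definition Ered d (x y : basis3 d) := (x.1.1 == y.1.1) && sw x.1.2 x.2 y.1.2 y.2.
Definition gD d (p : dicke_idx d -> algC) (x : basis3 d) :=
  if ~~ Ib x then q p (ms x) else 0.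
Definition Dx d (p : dicke_idx d -> algC) (x y : basis3 d) :=
  if Ered x y then gD p x else 0.
Definition Pu d (u : 'I_d * 'I_d) (x : basis3 d) := (x.1.1 == u.2) && Ib x && (ob x == u.1).
Definition Vw d (w : basis3 d -> algC) u := \sum_x (if Pu u x then w x else 0).
Definition Qf (T : finType) (A : fmat T) (w : T -> algC) :=
  \sum_i \sum_j (w i)^* * A i j * w j.

Lemma pt_split d (p : dicke_idx d -> algC) x y :
  ptrans1 (rhoDS p) x y = Ax p x y + Dx p x y.
Proof. by rewrite /ptrans1 rhoE /ms /= split_pt. Qed.

Lemma Qf_split (T : finType) (A B : fmat T) w :
  Qf (fun x y => A x y + B x y) w = Qf A w + Qf B w.
Proof.
rewrite /Qf -big_split; apply: eq_bigr => x _; rewrite -big_split.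
by apply: eq_bigr => y _; rewrite mulrDr mulrDl.
Qed.

Lemma Qf_ext (T : finType) (A B : fmat T) w w' :
  (forall x y, A x y = B x y) -> (forall x, w x = w' x) -> Qf A w = Qf B w'.
Proof.
move=> hA hw; apply: eq_bigr => x _; apply: eq_bigr => y _; by rewrite hA !hw.
Qed.

Lemma sum4 (T U : finType) (F : U -> U -> T -> T -> algC) :
 \sum_u \sum_u' \sum_x \sum_y F u u' x y = \sum_x \sum_y \sum_u \sum_u' F u u' x y.
Proof.
under eq_bigr => u _ do rewrite exchange_big.
rewrite exchange_big.
under eq_bigr => x _ do under eq_bigr => u _ do rewrite exchange_big.
by under eq_bigr => x _ do rewrite exchange_big.
Qed.

Lemma Qf_pull (T U : finType) (A : fmat U) (P : U -> T -> bool) w :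
 Qf A (fun u => \sum_x (if P u x then w x else 0)) =
 Qf (fun x y => \sum_u \sum_u' ((if P u x then 1 else 0) * (if P u' y then 1 else 0) * A u u')) w.
Proof.
rewrite /Qf.
transitivity (\sum_u \sum_u' \sum_x \sum_y
   (w x)^* * ((if P u x then 1 else 0) * (if P u' y then 1 else 0) * A u u') * w y); last first.
  rewrite sum4; apply: eq_bigr => x _; apply: eq_bigr => y _.
  by rewrite mulr_sumr mulr_suml; apply: eq_bigr => u _; rewrite mulr_sumr mulr_suml.
apply: eq_bigr => u _; apply: eq_bigr => u' _.
rewrite conj_sum mulr_suml mulr_suml; apply: eq_bigr => x _.
rewrite mulr_sumr; apply: eq_bigr => y _.
by case: (P u x); case: (P u' y); rewrite ?(mulr0, mul0r, mulr1, mul1r).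
Qed.

Lemma sumP d (x : basis3 d) (F : 'I_d * 'I_d -> algC) :
  \sum_u (if Pu u x then 1 else 0) * F u = if Ib x then F (ob x, x.1.1) else 0.
Proof.
rewrite (bigD1 (ob x, x.1.1)) //= big1 => [|u ne].
  by rewrite /Pu /= !eqxx andbT /=; case: (Ib x); rewrite ?mul1r ?mul0r addr0.
case: ifP => [/andP[/andP[/eqP e1 _] /eqP e2]|_]; last by rewrite mul0r.
by rewrite e1 e2 -surjective_pairing eqxx in ne.
Qed.

Lemma QA d (p : dicke_idx d -> algC) w : Qf (Ax p) w = Qf (M3 p) (Vw w).
Proof.
rewrite /Vw Qf_pull; apply: Qf_ext => // x y.
under eq_bigr do under eq_bigr do rewrite -mulrA.
under eq_bigr do rewrite -mulr_sumr.
rewrite sumP sumP /Ax /M3 /= pbarE.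
by case: (Ib x); case: (Ib y).
Qed.

Lemma QD_ge0 d (p : dicke_idx d -> algC) w :
  (forall k, 0 <= p k) -> 0 <= Qf (Dx p) w.
Proof.
move=> hp; apply: equiv_psd.
- by move=> x; rewrite /Ered /sw !eqxx.
- move=> x y; rewrite /Ered /sw => /andP[/eqP-> /orP[]/andP[/eqP-> /eqP->]];
  by rewrite !eqxx ?orbT.
- move=> x y z; rewrite /Ered /sw => /andP[/eqP-> h1] /andP[/eqP-> h2]; rewrite eqxx /=.
  by case/orP: h1 => /andP[/eqP-> /eqP->]; case/orP: h2 => /andP[/eqP-> /eqP->];
    rewrite !eqxx ?orbT.
- move=> [[a b] c] [[a' b'] c']; rewrite /Ered /sw /gD /Ib /ms /= => /andP[/eqP<- ].
  case/orP => /andP[/eqP<- /eqP<-] //.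
  have -> : Ix a c b = Ix a b c by rewrite /Ix orbC.
  have -> : mset3 a c b = mset3 a b c.
    by apply/eqP/mset3_eqP => j; rewrite /cnt; lia.
  by [].
- move=> [[a b] c]; rewrite /gD; case: ifP => _ //; exact: q_ge0.
Qed.

Theorem theorem5 (d : nat) (p : dicke_idx d -> algC) :
  (2 <= d)%N ->
  (forall k, 0 <= p k) ->
  \sum_(k | valid_idx k) p k = 1 ->
  PPT p <-> DNN (M3 p).
Proof.
move=> _ hp _; split.
- move=> H; split; last first.
    move=> x y; rewrite /M3; case: ifP => _ //; rewrite pbarE; exact: q_ge0.
  move=> v.
  pose w (z : basis3 d) := if z.1.1 == z.1.2 then v (z.2, z.1.1) else 0.
  have := H w.
  have -> : \sum_i \sum_j (w i)^* * ptrans1 (rhoDS p) i j * w j = Qf (Ax p) w + Qf (Dx p) w.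
    by rewrite -Qf_split; apply: Qf_ext => // x y; rewrite pt_split.
  have -> : Qf (Dx p) w = 0.
    apply: big1 => x _; apply: big1 => y _.
    case: (eqVneq x.1.1 x.1.2) => [e|ne].
      by rewrite /Dx /gD /Ib /Ix e eqxx /= if_same mulr0 mul0r.
    by rewrite /w (negPf ne) conjC0 !mul0r.
  rewrite addr0 QA.
  have -> : Qf (M3 p) (Vw w) = Qf (M3 p) v; last by [].
  apply: Qf_ext => // u; rewrite /Vw (bigD1 ((u.2, u.2), u.1)) //=.
  have -> : Pu u (u.2, u.2, u.1) by rewrite /Pu /Ib /ob /Ix /ox /= !eqxx.
  rewrite /w /= eqxx -surjective_pairing big1 ?addr0 // => x ne.
  case: ifP => // /andP[/andP[/eqP e1 _] /eqP e2].
  move: e2 ne; rewrite /w /ob /ox; case: ifP => [/eqP e3|]; last by [].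
  move=> e2; move: x e1 e2 e3 => [[a b] c] /= e1 e2 e3.
  by rewrite -e1 -e2 -e3 eqxx.
- move=> [H _] w.
  have -> : \sum_i \sum_j (w i)^* * ptrans1 (rhoDS p) i j * w j = Qf (Ax p) w + Qf (Dx p) w.
    by rewrite -Qf_split; apply: Qf_ext => // x y; rewrite pt_split.
  by rewrite QA addr_ge0 ?QD_ge0 //; apply: H.
Qed.
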